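(* Let $f$ be a $C^{(3)}$ function on an open interval containing $0$ with $f(0)=f'(0)=0$ and $f''>0$, so that its graph is locally a strictly convex curve $X$ tangent to the $x$-axis at the origin $P=(0,0)$, with curvature $\kappa(P)=f''(0)$ there. For sufficiently small $h>0$ let $s=s(h)<0<t=t(h)$ be the numbers with $f(s)=f(t)=h$, and define $$\alpha_P(h)=\sqrt{h}\,\frac{f'(t)-f'(s)}{-f'(s)f'(t)}.$$ Then $$\lim_{h\to 0^+}\alpha_P(h)=\frac{\sqrt{2}}{\sqrt{\kappa(P)}}.$$ *)

(* Defs.v *)
From Stdlib Require Import Reals.
From Coquelicot Require Export Coquelicot.
Open Scope R_scope.

Definition C3_on (f : R -> R) (a b : R) : Prop :=
  forall x, a < x < b ->
    ex_derive_n f 1 x /\ ex_derive_n f 2 x /\ ex_derive_n f 3 x /\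
    continuous (Derive_n f 3) x.

Definition alphaP (f : R -> R) (s t : R) (h : R) : R :=
  sqrt h * (Derive f t - Derive f s) / (- (Derive f s * Derive f t)).

(* Main.v *)
Require Import Defs.
From Stdlib Require Import Reals Lra Psatz.
From Coquelicot Require Import Coquelicot.
Open Scope R_scope.

Lemma mvt (g dg : R -> R) (x y : R) :
  (forall c, Rmin x y <= c <= Rmax x y -> is_derive g c (dg c)) ->
  exists c, Rmin x y <= c <= Rmax x y /\ g y - g x = dg c * (y - x).
Proof.
  intros H. apply MVT_gen.
  - intros c Hc. apply H. lra.
  - intros c Hc. apply continuity_pt_filterlim.
    exact (ex_derive_continuous g c (ex_intro _ (dg c) (H c Hc))).
Qed.

Lemma minmax_bound x c : Rmin 0 x <= c <= Rmax 0 x -> Rabs c <= Rabs x /\ 0 <= c * x.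
Proof.
  unfold Rmin, Rmax; destruct (Rle_dec 0 x); intros;
  unfold Rabs; repeat destruct Rcase_abs; split; nra.
Qed.

Lemma minmax_bound2 x y c : Rmin x y <= c <= Rmax x y -> Rmin x y <= c <= Rmax x y -> 
  (x <= y -> x <= c <= y).
Proof. unfold Rmin, Rmax; destruct (Rle_dec x y); lra. Qed.

Lemma minmax_in a b x c : a < 0 < b -> a < x < b -> Rmin 0 x <= c <= Rmax 0 x -> a < c < b.
Proof. unfold Rmin, Rmax; destruct (Rle_dec 0 x); lra. Qed.

Lemma fprime_sign (a b : R) (f f2 : R -> R) :
  a < 0 < b ->
  (forall x, a < x < b -> is_derive (Derive f) x (f2 x)) ->
  (forall x, a < x < b -> 0 < f2 x) ->
  Derive f 0 = 0 ->
  forall x, a < x < b -> (0 < x -> 0 < Derive f x) /\ (x < 0 -> Derive f x < 0).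
Proof.
  intros Hab Hf2 Hpos H0 x Hx.
  destruct (mvt (Derive f) f2 0 x) as [c [Hc E]].
  - intros c Hc. apply Hf2. exact (minmax_in a b x c Hab Hx Hc).
  - assert (0 < f2 c).
    { apply Hpos. exact (minmax_in a b x c Hab Hx Hc). }
    rewrite H0 in E. split; intros; nra.
Qed.

Lemma f_mono (a b : R) (f f2 : R -> R) :
  a < 0 < b ->
  (forall x, a < x < b -> is_derive f x (Derive f x)) ->
  (forall x, a < x < b -> is_derive (Derive f) x (f2 x)) ->
  (forall x, a < x < b -> 0 < f2 x) ->
  Derive f 0 = 0 ->
  (forall r y, 0 <= r <= y -> y < b -> f r <= f y) /\
  (forall r y, a < y -> y <= r <= 0 -> f r <= f y).
Proof.
  intros Hab Hf1 Hf2 Hpos H0.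
  pose proof (fprime_sign a b f f2 Hab Hf2 Hpos H0) as Hs.
  split; intros r y H1 H2.
  - destruct (mvt f (Derive f) r y) as [c [Hc E]].
    + intros c Hc. apply Hf1. apply minmax_bound2 in Hc; [|exact Hc|lra]. lra.
    + apply minmax_bound2 in Hc; [|exact Hc|lra].
      destruct (Req_dec c 0) as [->|Hc0]. { rewrite H0 in E. lra. }
      destruct (Hs c) as [Hs1 _]. lra. specialize (Hs1 ltac:(lra)). nra.
  - destruct (mvt f (Derive f) y r) as [c [Hc E]].
    + intros c Hc. apply Hf1. apply minmax_bound2 in Hc; [|exact Hc|lra]. lra.
    + apply minmax_bound2 in Hc; [|exact Hc|lra].
      destruct (Req_dec c 0) as [->|Hc0]. { rewrite H0 in E. lra. }
      destruct (Hs c) as [_ Hs1]. lra. specialize (Hs1 ltac:(lra)). nra.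
Qed.


Lemma deriv_phi (f : R -> R) m c : is_derive f c (Derive f c) ->
  is_derive (fun y => f y - m/2*(y*y)) c (Derive f c - m*c).
Proof.
  intros H. auto_derive. exists (Derive f c); exact H.
  change (Derive (fun x => f x) c) with (Derive f c). field.
Qed.

Lemma key (a b : R) (f : R -> R) (k : R) :
  a < 0 < b ->
  (forall x, a < x < b -> is_derive f x (Derive f x)) ->
  is_derive (Derive f) 0 k -> Derive f 0 = 0 -> f 0 = 0 ->
  forall eps, 0 < eps -> exists d, 0 < d /\ d <= b /\ d <= -a /\
   forall x, Rabs x < d ->
   Rabs (Derive f x - k*x) <= eps * Rabs x /\ Rabs (f x - k/2*(x*x)) <= eps/2*(x*x).
Proof.
  intros Hab Hf1 Hd H0 Hf0 eps Heps.
  apply is_derive_Reals in Hd.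
  destruct (Hd eps Heps) as [delta Hdel].
  set (d := Rmin delta (Rmin b (-a))).
  assert (Hd1 : d <= delta) by apply Rmin_l.
  assert (Hd2 : d <= b) by (unfold d; 
      pose proof (Rmin_r delta (Rmin b (-a))); pose proof (Rmin_l b (-a)); lra).
  assert (Hd3 : d <= -a) by (pose proof (Rmin_r delta (Rmin b (-a))); pose proof (Rmin_r b (-a)); unfold d; lra).
  assert (Hdp : 0 < d).
  { unfold d. apply Rmin_pos. apply cond_pos. apply Rmin_pos; lra. }
  assert (P1 : forall x, Rabs x < d -> Rabs (Derive f x - k*x) <= eps * Rabs x).
  { intros x Hx. destruct (Req_dec x 0) as [->|Hx0].
    - rewrite H0. replace (0 - k*0) with 0 by ring. rewrite Rabs_R0. lra.
    - specialize (Hdel x Hx0 ltac:(lra)). rewrite H0, Rplus_0_l in Hdel.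
      replace (Derive f x - k*x) with (x * ((Derive f x - 0)/x - k)) by (field; auto).
      rewrite Rabs_mult. pose proof (Rabs_pos x). nra. }
  exists d; split; [lra|split;[lra|split;[lra|]]].
  intros x Hx. split. apply P1; exact Hx.
  assert (Hxab : a < x < b) by (revert Hx; unfold Rabs; destruct Rcase_abs; lra).
  assert (Hin : forall c, Rmin 0 x <= c <= Rmax 0 x -> is_derive f c (Derive f c)).
  { intros c Hc. apply Hf1. exact (minmax_in a b x c Hab Hxab Hc). }
  destruct (mvt (fun y => f y - (k+eps)/2*(y*y)) (fun y => Derive f y - (k+eps)*y) 0 x) as [c [Hc E]].
  { intros c Hc. apply deriv_phi. apply Hin; exact Hc. }
  destruct (mvt (fun y => f y - (k-eps)/2*(y*y)) (fun y => Derive f y - (k-eps)*y) 0 x) as [c' [Hc' E']].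
  { intros c0 Hc0. apply deriv_phi. apply Hin; exact Hc0. }
  apply minmax_bound in Hc. apply minmax_bound in Hc'.
  destruct Hc as [Hc1 Hc2]. destruct Hc' as [Hc1' Hc2'].
  pose proof (P1 c ltac:(lra)) as B. pose proof (P1 c' ltac:(lra)) as B'.
  rewrite Hf0 in E, E'.
  assert (A1 : (Derive f c - k*c) * x <= eps * (c * x)).
  { pose proof (Rle_abs ((Derive f c - k*c) * x)). rewrite Rabs_mult in H.
    assert (Rabs c * Rabs x = c * x) by (rewrite <- Rabs_mult; apply Rabs_pos_eq; lra).
    pose proof (Rabs_pos x). nra. }
  assert (A2 : - (eps * (c' * x)) <= (Derive f c' - k*c') * x).
  { pose proof (Rle_abs (-((Derive f c' - k*c') * x))). rewrite Rabs_Ropp, Rabs_mult in H.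
    assert (Rabs c' * Rabs x = c' * x) by (rewrite <- Rabs_mult; apply Rabs_pos_eq; lra).
    pose proof (Rabs_pos x). nra. }
  apply Rabs_le. nra.
Qed.


Lemma comb (A B : R -> R) la lb :
  filterlim A (at_right 0) (locally la) -> filterlim B (at_right 0) (locally lb) -> lb <> 0 ->
  filterlim (fun h => sqrt (A h) / B h) (at_right 0) (locally (sqrt la / lb)).
Proof.
  intros HA HB Hlb.
  apply (filterlim_comp_2 (G := locally (sqrt la)) (H := locally (/ lb)) (fun h => sqrt (A h)) (fun h => / B h) Rmult).
  - apply filterlim_comp with (1 := HA). apply continuous_sqrt.
  - apply filterlim_comp with (1 := HB).
    apply (filterlim_Rbar_inv (Finite lb)). intro H. injection H. exact Hlb.
  - apply (filterlim_mult (K := R_AbsRing)).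
Qed.

Lemma comb_plus (A B : R -> R) la lb :
  filterlim A (at_right 0) (locally la) -> filterlim B (at_right 0) (locally lb) ->
  filterlim (fun h => A h + B h) (at_right 0) (locally (la + lb)).
Proof.
  intros HA HB.
  apply (filterlim_comp_2 A B Rplus HA HB).
  apply (filterlim_plus (V := R_NormedModule)).
Qed.


Definition keyP (f : R -> R) k :=
  forall eps, 0 < eps -> exists d, 0 < d /\
   forall x, Rabs x < d ->
   Rabs (Derive f x - k*x) <= eps * Rabs x /\ Rabs (f x - k/2*(x*x)) <= eps/2*(x*x).

Lemma at_right_of (P : R -> Prop) eta : 0 < eta -> (forall h, 0 < h < eta -> P h) -> at_right 0 P.
Proof.
  intros He H. exists (mkposreal eta He). intros y Hy Hy0.
  unfold ball in Hy; simpl in Hy. unfold AbsRing_ball, abs, minus, plus, opp in Hy. simpl in Hy.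
  apply H. revert Hy; unfold Rabs; destruct Rcase_abs; lra.
Qed.

Lemma xlim (f : R -> R) k (X : R -> R) delta0 :
  keyP f k -> 0 < delta0 ->
  (forall h, 0 < h < delta0 -> X h <> 0 /\ f (X h) = h) ->
  (forall d, 0 < d -> exists eta, 0 < eta /\ forall h, 0 < h < eta -> Rabs (X h) < d) ->
  filterlim (fun h => h / (X h * X h)) (at_right 0) (locally (k/2)) /\
  filterlim (fun h => Derive f (X h) / X h) (at_right 0) (locally k).
Proof.
  intros Hk Hd0 HX Hs. split; apply filterlim_locally; intros eps;
  destruct (Hk (eps/2) ltac:(pose proof (cond_pos eps); lra)) as [d [Hd Hb]];
  destruct (Hs d Hd) as [eta [Heta He]];
  apply (at_right_of _ (Rmin eta delta0)); try (apply Rmin_pos; lra);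
  intros h Hh; pose proof (Rmin_l eta delta0); pose proof (Rmin_r eta delta0);
  destruct (HX h ltac:(lra)) as [Hx0 Hfx];
  destruct (Hb (X h) (He h ltac:(lra))) as [B1 B2];
  unfold ball; simpl; unfold AbsRing_ball, abs, minus, plus, opp; simpl;
  pose proof (cond_pos eps).
  - rewrite Hfx in B2.
    assert (0 < X h * X h) by (apply Rsqr_pos_lt; exact Hx0).
    replace (h - k/2*(X h * X h)) with ((h / (X h * X h) + - (k/2)) * (X h * X h)) in B2 by (field; auto).
    rewrite Rabs_mult, (Rabs_pos_eq (X h * X h)) in B2 by lra.
    assert (Rabs (h / (X h * X h) + - (k / 2)) <= eps/2/2) by (apply (Rmult_le_reg_r (X h * X h)); [exact H2|exact B2]).
    lra.
  - replace (Derive f (X h) - k * X h) with ((Derive f (X h) / X h + - k) * X h) in B1 by (field; auto).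
    rewrite Rabs_mult in B1.
    assert (0 < Rabs (X h)) by (apply Rabs_pos_lt; exact Hx0).
    assert (Rabs (Derive f (X h) / X h + - k) <= eps/2) by (apply (Rmult_le_reg_r (Rabs (X h))); [exact H2|exact B1]).
    lra.
Qed.


Lemma fr_pos (f : R -> R) k d : 0 < k -> keyP f k -> 0 < d ->
  exists r, 0 < r < d /\ 0 < f r /\ 0 < f (- r).
Proof.
  intros Hk HK Hd. destruct (HK (k/2) ltac:(lra)) as [d1 [Hd1 Hb]].
  set (r := Rmin d d1 / 2).
  assert (Hm : 0 < Rmin d d1) by (apply Rmin_pos; lra).
  pose proof (Rmin_l d d1). pose proof (Rmin_r d d1).
  exists r. assert (0 < r < d) by (unfold r; lra). split; [exact H1|].
  assert (Rabs r < d1) by (rewrite Rabs_pos_eq; unfold r; lra).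
  assert (Rabs (-r) < d1) by (rewrite Rabs_Ropp, Rabs_pos_eq; unfold r; lra).
  destruct (Hb r H2) as [_ B]. destruct (Hb (-r) H3) as [_ B'].
  apply Rabs_le_between in B. apply Rabs_le_between in B'.
  assert (0 < k * (r*r)) by (apply Rmult_lt_0_compat; nra).
  split; lra.
Qed.

Lemma small_pos (b : R) (f : R -> R) k (X : R -> R) delta0 :
  0 < k -> keyP f k -> 0 < delta0 ->
  (forall h, 0 < h < delta0 -> 0 < X h < b /\ f (X h) = h) ->
  (forall r y, 0 <= r <= y -> y < b -> f r <= f y) ->
  forall d, 0 < d -> exists eta, 0 < eta /\ forall h, 0 < h < eta -> Rabs (X h) < d.
Proof.
  intros Hk HK Hd0 HX Hm d Hd.
  destruct (fr_pos f k d Hk HK Hd) as [r [Hr [Hfr _]]].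
  exists (Rmin (f r) delta0). split. apply Rmin_pos; lra.
  intros h Hh. pose proof (Rmin_l (f r) delta0). pose proof (Rmin_r (f r) delta0).
  destruct (HX h ltac:(lra)) as [HXb Hf].
  rewrite Rabs_pos_eq by lra.
  destruct (Rlt_or_le (X h) r). lra.
  pose proof (Hm r (X h) ltac:(lra) ltac:(lra)). lra.
Qed.

Lemma small_neg (a : R) (f : R -> R) k (X : R -> R) delta0 :
  0 < k -> keyP f k -> 0 < delta0 ->
  (forall h, 0 < h < delta0 -> a < X h < 0 /\ f (X h) = h) ->
  (forall r y, a < y -> y <= r <= 0 -> f r <= f y) ->
  forall d, 0 < d -> exists eta, 0 < eta /\ forall h, 0 < h < eta -> Rabs (X h) < d.
Proof.
  intros Hk HK Hd0 HX Hm d Hd.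
  destruct (fr_pos f k d Hk HK Hd) as [r [Hr [_ Hfr]]].
  exists (Rmin (f (-r)) delta0). split. apply Rmin_pos; lra.
  intros h Hh. pose proof (Rmin_l (f (-r)) delta0). pose proof (Rmin_r (f (-r)) delta0).
  destruct (HX h ltac:(lra)) as [HXb Hf].
  rewrite Rabs_left by lra.
  destruct (Rlt_or_le (-r) (X h)). lra.
  pose proof (Hm (-r) (X h) ltac:(lra) ltac:(lra)). lra.
Qed.


Theorem lemma5 (f : R -> R) (a b : R) (s t : R -> R) :
  a < 0 < b ->
  C3_on f a b ->
  f 0 = 0 ->
  Derive f 0 = 0 ->
  (forall x, a < x < b -> 0 < Derive_n f 2 x) ->
  (exists delta, 0 < delta /\
     forall h, 0 < h < delta ->
       a < s h < 0 /\ 0 < t h < b /\ f (s h) = h /\ f (t h) = h) ->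
  filterlim (fun h => alphaP f (s h) (t h) h) (at_right 0)
            (locally (sqrt 2 / sqrt (Derive_n f 2 0))).
Proof.
  intros Hab HC Hf0 H0 Hpos [delta0 [Hd0 Hst]].
  assert (Hf1 : forall x, a < x < b -> is_derive f x (Derive f x)).
  { intros x Hx. destruct (HC x Hx) as [E _]. apply Derive_correct. exact E. }
  assert (Hf2 : forall x, a < x < b -> is_derive (Derive f) x (Derive_n f 2 x)).
  { intros x Hx. destruct (HC x Hx) as [_ [E _]]. apply (Derive_correct (Derive_n f 1)). exact E. }
  set (k := Derive_n f 2 0) in *.
  assert (Hk : 0 < k) by (apply Hpos; lra).
  assert (HK : keyP f k).
  { intros eps Heps. destruct (key a b f k Hab Hf1 (Hf2 0 ltac:(lra)) H0 Hf0 eps Heps)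
      as [d [Hd [_ [_ Hb]]]]. exists d. split; assumption. }
  destruct (f_mono a b f (Derive_n f 2) Hab Hf1 Hf2 Hpos H0) as [Mr Ml].
  pose proof (fprime_sign a b f (Derive_n f 2) Hab Hf2 Hpos H0) as Hsg.
  assert (St : forall d, 0 < d -> exists eta, 0 < eta /\ forall h, 0 < h < eta -> Rabs (t h) < d).
  { apply (small_pos b f k t delta0 Hk HK Hd0); [|exact Mr].
    intros h Hh. destruct (Hst h Hh) as [_ [A [_ B]]]. split; assumption. }
  assert (Ss : forall d, 0 < d -> exists eta, 0 < eta /\ forall h, 0 < h < eta -> Rabs (s h) < d).
  { apply (small_neg a f k s delta0 Hk HK Hd0); [|exact Ml].
    intros h Hh. destruct (Hst h Hh) as [A [_ [B _]]]. split; assumption. }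
  destruct (xlim f k t delta0 HK Hd0) as [At Bt]; [|exact St|].
  { intros h Hh. destruct (Hst h Hh) as [_ [A [_ B]]]. split; [lra|exact B]. }
  destruct (xlim f k s delta0 HK Hd0) as [As Bs]; [|exact Ss|].
  { intros h Hh. destruct (Hst h Hh) as [A [_ [B _]]]. split; [lra|exact B]. }
  pose proof (comb_plus _ _ _ _ (comb _ _ _ _ At Bt ltac:(lra)) (comb _ _ _ _ As Bs ltac:(lra))) as L.
  replace (sqrt 2 / sqrt k) with (sqrt (k / 2) / k + sqrt (k / 2) / k).
  2:{ rewrite sqrt_div by lra.
      assert (Hk2 : sqrt k * sqrt k = k) by (apply sqrt_sqrt; lra).
      assert (H22 : sqrt 2 * sqrt 2 = 2) by (apply sqrt_sqrt; lra).
      assert (0 < sqrt k) by (apply sqrt_lt_R0; lra).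
      assert (0 < sqrt 2) by (apply sqrt_lt_R0; lra).
      set (u := sqrt k) in *. set (v := sqrt 2) in *.
      rewrite <- Hk2.
      replace (u / v / (u * u) + u / v / (u * u)) with ((v*v)/(u*v)) by (rewrite H22; field; lra).
      field. lra. }
  refine (filterlim_ext_loc _ _ _ L).
  apply (at_right_of _ delta0 Hd0). intros h Hh.
  destruct (Hst h Hh) as [Hs [Ht [Hfs Hft]]].
  destruct (Hsg (t h) ltac:(lra)) as [Dt _]. specialize (Dt ltac:(lra)).
  destruct (Hsg (s h) ltac:(lra)) as [_ Ds]. specialize (Ds ltac:(lra)).
  assert (Q : forall x, x <> 0 -> sqrt (h / (x * x)) = sqrt h / Rabs x).
  { intros x Hx. rewrite sqrt_div. rewrite <- sqrt_Rsqr_abs. reflexivity.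
    lra. apply Rsqr_pos_lt; exact Hx. }
  rewrite !Q by lra. rewrite (Rabs_pos_eq (t h)) by lra. rewrite (Rabs_left (s h)) by lra.
  unfold alphaP. field. repeat split; lra.
Qed.
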